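(* Let $A,B,C$ be logically independent events and let $0\le\alpha_1\le\beta_1\le 1$, $0\le\alpha_2\le\beta_2\le 1$. Consider the family of conditional events $\{C|A,\ B|A,\ C|AB\}$. The set of values $z$ for which there exist $x\in[\alpha_1,\beta_1]$ and $y\in[\alpha_2,\beta_2]$ such that the assessment $P(C|A)=x$, $P(B|A)=y$, $P(C|AB)=z$ is coherent is exactly the interval $[\alpha_3,\beta_3]$, where \[ \alpha_3=\begin{cases}\dfrac{\alpha_1+\alpha_2-1}{\alpha_2}, & \alpha_1+\alpha_2>1,\\[1ex] 0, & \alpha_1+\alpha_2\le 1,\end{cases} \qquad \beta_3=\begin{cases}\dfrac{\beta_1}{\alpha_2}, & \beta_1<\alpha_2,\\[1ex] 1, & \beta_1\ge \alpha_2.\end{cases} \] (Cautious Monotonicity: the bounds $P(C|A)\in[\alpha_1,\beta_1]$, $P(B|A)\in[\alpha_2,\beta_2]$ propagate exactly to $P(C|AB)\in[\alpha_3,\beta_3]$.)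
   Context: Events are elements of a Boolean algebra; $AB$ denotes conjunction, $A\vee B$ disjunction, $A^c$ negation. $A,B,C$ are logically independent if all eight conjunctions $A^{*}B^{*}C^{*}$ (each $X^{*}\in\{X,X^c\}$) are possible (nonempty). A conditional event $E|H$ requires $H\neq\emptyset$; conditional probabilities are treated as primitive (no requirement that $P(H)>0$). Coherence (de Finetti): an assessment $(p_1,\dots,p_n)$ on conditional events $E_1|H_1,\dots,E_n|H_n$ is coherent if for every nonempty $J\subseteq\{1,\dots,n\}$ and every real numbers $s_j$ ($j\in J$), the random gain $G=\sum_{j\in J}s_j\,I_{H_j}(I_{E_j}-p_j)$ (with $I$ denoting indicator functions) satisfies $\max G\ge 0$, where the maximum is taken over the possible worlds (atoms) contained in $\bigvee_{j\in J}H_j$. *)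

(* Defs.v *)
From Stdlib Require Import Reals List.
Import ListNotations.
Open Scope R_scope.

(* Events are modelled as subsets (boolean predicates) of a sample space
   Omega of possible worlds; conjunction is pointwise &&.  Every Boolean
   algebra embeds into such a powerset algebra (Stone), so this is general. *)
Definition event (Omega : Type) := Omega -> bool.

Definition ev_and {Omega : Type} (A B : event Omega) : event Omega :=
  fun w => andb (A w) (B w).

Definition logically_independent {Omega : Type} (A B C : event Omega) : Prop :=
  forall bA bB bC : bool, exists w : Omega, A w = bA /\ B w = bB /\ C w = bC.

Definition ind (b : bool) : R := if b then 1 else 0.

(* A conditional event E|H is a pair (E, H). *)
Definition cevent (Omega : Type) := (event Omega * event Omega)%type.

Definition gain {Omega : Type} (F : list (cevent Omega)) (p : list R)
    (J : list nat) (s : nat -> R) (w : Omega) : R :=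
  fold_right (fun j acc =>
     s j * ind (snd (nth j F (fun _ => false, fun _ => false)) w)
         * (ind (fst (nth j F (fun _ => false, fun _ => false)) w) - nth j p 0)
     + acc) 0 J.

(* Since G takes finitely many
   values, "max G >= 0 over worlds in the disjunction of the H_j" means
   that some world in that disjunction has G >= 0. *)
Definition coherent {Omega : Type} (F : list (cevent Omega)) (p : list R) : Prop :=
  length p = length F /\
  (forall j, (j < length F)%nat ->
     exists w, snd (nth j F (fun _ => false, fun _ => false)) w = true) /\
  forall (J : list nat), J <> [] -> NoDup J ->
    (forall j, In j J -> (j < length F)%nat) ->
    forall s : nat -> R,
      exists w : Omega,
        (exists j, In j J /\ snd (nth j F (fun _ => false, fun _ => false)) w = true) /\
        0 <= gain F p J s w.

Definition alpha3 (a1 a2 : R) : R :=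
  if Rlt_dec 1 (a1 + a2) then (a1 + a2 - 1) / a2 else 0.

Definition beta3 (b1 a2 : R) : R :=
  if Rlt_dec b1 a2 then b1 / a2 else 1.

(* Main.v *)
Require Import Defs.
From Stdlib Require Import Reals List Lra Lia Psatz.
Import ListNotations.
Open Scope R_scope.

Section S.
Context {Omega : Type}.

Definition dflt : cevent Omega := (fun _ => false, fun _ => false).

Definition term (F : list (cevent Omega)) (p : list R) (s : nat -> R) (j : nat) (w : Omega) : R :=
  s j * Defs.ind (snd (nth j F dflt) w) * (Defs.ind (fst (nth j F dflt) w) - nth j p 0).

Lemma gain_cons F p j J s w : gain F p (j :: J) s w = term F p s j w + gain F p J s w.
Proof. reflexivity. Qed.

Lemma gain_comb F p s w1 w2 w3 w4 a b c d :
  (forall j, a * term F p s j w1 + b * term F p s j w2 + c * term F p s j w3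
              + d * term F p s j w4 = 0) ->
  forall J, a * gain F p J s w1 + b * gain F p J s w2 + c * gain F p J s w3
            + d * gain F p J s w4 = 0.
Proof.
  intros H J; induction J as [|j J IH].
  - unfold gain; simpl; ring.
  - rewrite !gain_cons. specialize (H j). lra.
Qed.
End S.

Lemma nodup3 : NoDup [0%nat;1%nat;2%nat].
Proof. repeat constructor; simpl; intuition congruence. Qed.

Lemma suff (Omega : Type) (A B C : event Omega) :
  logically_independent A B C -> forall x y z,
  0 <= z <= 1 -> 0 <= y * z -> 0 <= y * (1 - z) -> 0 <= x - y * z ->
  0 <= 1 - x - y + y * z ->
  coherent [(C, A); (B, A); (C, ev_and A B)] [x; y; z].
Proof.
  intros LI x y z Hz H1 H2 H3 H4.
  destruct (LI true true true) as (w1 & A1 & B1 & C1).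
  destruct (LI true true false) as (w2 & A2 & B2 & C2).
  destruct (LI true false true) as (w3 & A3 & B3 & C3).
  destruct (LI true false false) as (w4 & A4 & B4 & C4).
  split; [reflexivity|]. split.
  { intros j Hj. destruct j as [|[|[|j]]]; simpl.
    - exists w1; auto.
    - exists w1; auto.
    - exists w1; unfold ev_and; rewrite A1, B1; auto.
    - simpl in Hj; lia. }
  intros J HJ HND Hlt s.
  destruct (in_dec Nat.eq_dec 0%nat J) as [I0|N0];
  [| destruct (in_dec Nat.eq_dec 1%nat J) as [I1|N1]].
  3:{
    destruct J as [|j J']; [congruence|].
    assert (j = 2%nat).
    { assert (Hj := Hlt j (or_introl eq_refl)). simpl in Hj.
      destruct (Nat.eq_dec j 0); [subst; simpl in N0; tauto|].
      destruct (Nat.eq_dec j 1); [subst; simpl in N1; tauto|]. lia. }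
    subst j.
    destruct J' as [|k J''].
    2:{ exfalso. assert (Hk := Hlt k (or_intror (or_introl eq_refl))). simpl in Hk.
        destruct (Nat.eq_dec k 0); [subst; simpl in N0; tauto|].
        destruct (Nat.eq_dec k 1); [subst; simpl in N1; tauto|].
        assert (k = 2%nat) by lia. subst k. inversion HND; subst. simpl in *; tauto. }
    destruct (Rle_dec 0 (s 2%nat)).
    - exists w1. split.
      + exists 2%nat. split; [simpl; auto|]. simpl. unfold ev_and. rewrite A1, B1; auto.
      + unfold gain; simpl. unfold ev_and. rewrite A1, B1, C1. simpl. nra.
    - exists w2. split.
      + exists 2%nat. split; [simpl; auto|]. simpl. unfold ev_and. rewrite A2, B2; auto.
      + unfold gain; simpl. unfold ev_and. rewrite A2, B2, C2. simpl. nra. }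
  all: assert (Hc := gain_comb [(C, A); (B, A); (C, ev_and A B)] [x; y; z] s w1 w2 w3 w4
           (y * z) (y * (1 - z)) (x - y * z) (1 - x - y + y * z));
    assert (Hc' : forall J, y * z * gain [(C, A); (B, A); (C, ev_and A B)] [x; y; z] J s w1
      + y * (1 - z) * gain [(C, A); (B, A); (C, ev_and A B)] [x; y; z] J s w2
      + (x - y * z) * gain [(C, A); (B, A); (C, ev_and A B)] [x; y; z] J s w3
      + (1 - x - y + y * z) * gain [(C, A); (B, A); (C, ev_and A B)] [x; y; z] J s w4 = 0)
    by (apply Hc; intros j; destruct j as [|[|[|j]]]; unfold term, ev_and; simpl;
        rewrite ?A1, ?B1, ?C1, ?A2, ?B2, ?C2, ?A3, ?B3, ?C3, ?A4, ?B4, ?C4; simpl;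
        [ring|ring|ring|destruct j; simpl; ring]);
    specialize (Hc' J);
    set (g1 := gain _ _ J s w1) in *; set (g2 := gain _ _ J s w2) in *;
    set (g3 := gain _ _ J s w3) in *; set (g4 := gain _ _ J s w4) in *;
    first [ pose (j0 := 0%nat); assert (Ij : In j0 J) by exact I0
          | pose (j0 := 1%nat); assert (Ij : In j0 J) by exact I1 ];
    assert (HH : forall w, A w = true ->
      exists j, In j J /\ snd (nth j [(C, A); (B, A); (C, ev_and A B)] dflt) w = true)
      by (intros w Aw; exists j0; split; [exact Ij|]; unfold j0; simpl; exact Aw);
    (destruct (Rle_dec 0 g1); [exists w1; split; [apply HH; auto| assumption]|]);
    (destruct (Rle_dec 0 g2); [exists w2; split; [apply HH; auto| assumption]|]);
    (destruct (Rle_dec 0 g3); [exists w3; split; [apply HH; auto| assumption]|]);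
    (destruct (Rle_dec 0 g4); [exists w4; split; [apply HH; auto| assumption]|]);
    exfalso;
    (assert (P1 : y * z * g1 <= 0) by nra);
    (assert (P2 : y * (1 - z) * g2 <= 0) by nra);
    (assert (P3 : (x - y * z) * g3 <= 0) by nra);
    (assert (P4 : (1 - x - y + y * z) * g4 <= 0) by nra);
    (assert (E1 : y * z = 0) by nra);
    (assert (E2 : y * (1 - z) = 0) by nra);
    (assert (E3 : x - y * z = 0) by nra);
    (assert (E4 : 1 - x - y + y * z = 0) by nra);
    lra.
Qed.

Lemma nec (Omega : Type) (A B C : event Omega) x y z :
  coherent [(C, A); (B, A); (C, ev_and A B)] [x; y; z] ->
  0 <= z <= 1 /\ y * z <= x /\ x + y - 1 <= y * z.
Proof.
  intros (_ & _ & H).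
  assert (H2 : forall s, exists w, A w = true /\ B w = true /\
             0 <= s * (Defs.ind (C w) - z)).
  { intros s0. destruct (H [2%nat] ltac:(congruence) ltac:(repeat constructor; simpl; tauto)
      ltac:(intros j [<-|[]]; simpl; lia) (fun _ => s0)) as (w & (j & Hj & Hw) & G).
    destruct Hj as [<-|[]]. simpl in Hw. unfold ev_and in Hw.
    apply andb_prop in Hw. destruct Hw as [Aw Bw].
    exists w. split; [exact Aw|]. split; [exact Bw|]. unfold gain in G; simpl in G. unfold ev_and in G.
    rewrite Aw, Bw in G. simpl in G. lra. }
  assert (H3 : forall a b c, exists w, A w = true /\
     0 <= gain [(C, A); (B, A); (C, ev_and A B)] [x; y; z] [0%nat;1%nat;2%nat]
           (fun j => match j with 0%nat => a | 1%nat => b | _ => c end) w).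
  { intros a b c. destruct (H [0%nat;1%nat;2%nat] ltac:(congruence) nodup3
      ltac:(intros j [<-|[<-|[<-|[]]]]; simpl; lia)
      (fun j => match j with 0%nat => a | 1%nat => b | _ => c end)) as (w & (j & Hj & Hw) & G).
    exists w. split; [|exact G].
    destruct Hj as [<-|[<-|[<-|[]]]]; simpl in Hw; unfold ev_and in Hw; auto.
    destruct (A w); auto. }
  split; [split|split].
  - destruct (Rle_dec 0 z) as [|n]; auto. exfalso.
    destruct (H2 (-1)) as (w & _ & _ & G). destruct (C w); simpl in G; lra.
  - destruct (Rle_dec z 1) as [|n]; auto. exfalso.
    destruct (H2 1) as (w & _ & _ & G). destruct (C w); simpl in G; lra.
  - destruct (Rle_dec (y * z) x) as [|n]; auto. exfalso.
    destruct (H3 (-1) z 1) as (w & Aw & G). unfold gain, ev_and in G; simpl in G.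
    rewrite Aw in G. destruct (B w), (C w); simpl in G; nra.
  - destruct (Rle_dec (x + y - 1) (y * z)) as [|n]; auto. exfalso.
    destruct (H3 1 (1 - z) (-1)) as (w & Aw & G). unfold gain, ev_and in G; simpl in G.
    rewrite Aw in G. destruct (B w), (C w); simpl in G; nra.
Qed.

Theorem mainTheorem1 :
  forall (Omega : Type) (A B C : event Omega),
    logically_independent A B C ->
    forall a1 b1 a2 b2 : R,
      0 <= a1 -> a1 <= b1 -> b1 <= 1 ->
      0 <= a2 -> a2 <= b2 -> b2 <= 1 ->
      forall z : R,
        (exists x y : R, a1 <= x <= b1 /\ a2 <= y <= b2 /\
           coherent [(C, A); (B, A); (C, ev_and A B)] [x; y; z])
        <-> alpha3 a1 a2 <= z <= beta3 b1 a2.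
Proof.
  intros Omega A B C LI a1 b1 a2 b2 h1 h2 h3 h4 h5 h6 z. split.
  - intros (x & y & Hx & Hy & Hc). destruct (nec _ _ _ _ _ _ _ Hc) as (Hz & P & Q).
    unfold alpha3, beta3. split.
    + destruct (Rlt_dec 1 (a1 + a2)); [|lra].
      unfold Rdiv. apply Rmult_le_reg_r with a2; [lra|].
      rewrite Rmult_assoc, Rinv_l, Rmult_1_r by lra. nra.
    + destruct (Rlt_dec b1 a2); [|lra].
      unfold Rdiv. apply Rmult_le_reg_r with a2; [lra|].
      rewrite Rmult_assoc, Rinv_l, Rmult_1_r by lra. nra.
  - unfold alpha3, beta3. intros [Hl Hu].
    assert (L : 0 <= z /\ a1 + a2 - 1 <= a2 * z).
    { destruct (Rlt_dec 1 (a1 + a2)).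
      - assert (a2 * ((a1 + a2 - 1) / a2) = a1 + a2 - 1) by (field; lra).
        split.
        + assert (0 <= (a1 + a2 - 1) / a2) by (unfold Rdiv; apply Rmult_le_pos; [lra|left; apply Rinv_0_lt_compat; lra]). lra.
        + nra.
      - split; nra. }
    assert (U : z <= 1 /\ a2 * z <= b1).
    { destruct (Rlt_dec b1 a2).
      - assert (a2 * (b1 / a2) = b1) by (field; lra).
        assert (b1 / a2 <= 1).
        { unfold Rdiv. apply Rmult_le_reg_r with a2; [lra|].
          rewrite Rmult_assoc, Rinv_l, Rmult_1_r by lra. lra. }
        split; nra.
      - split; nra. }
    destruct (Rle_dec a1 (a2 * z)).
    + exists (a2 * z), a2. split; [lra|]. split; [lra|].
      apply suff; auto; try lra; nra.
    + exists a1, a2. split; [lra|]. split; [lra|].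
      apply suff; auto; try lra; nra.
Qed.
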